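(* Let $G$ be a Tanner graph and $t\ge1$ an integer such that every irreducible lift-realizable pseudocodeword of $G$ has all components in $[0,t]$. Then every irreducible lift-realizable pseudocodeword $p=(p_1,\dots,p_n)$ of $G$ with support set $V$ satisfies (a) $w^{AWGN}(p)\ge \frac{2t^2}{(1+t^2)(t-1)+2t}|V|$ and (b) $w^{BSC}(p)\ge \frac1t|V|$.
   Context: A Tanner graph $G$ is a finite bipartite graph with variable nodes $v_1,\dots,v_n$ and check nodes; its code consists of all $x\in\{0,1\}^n$ with every check node having an even number of neighbours $v_i$ with $x_i=1$. A degree-$\ell$ lift replaces each node by $\ell$ copies and each edge by a perfect matching between copy-sets; a lift-realizable pseudocodeword $p\in\mathbb{Z}_{\ge0}^n$ is obtained from a codeword of the code of a finite lift by letting $p_i$ be the number of copies of $v_i$ assigned 1; it is irreducible if it is not a sum of two or more nonzero codewords/pseudocodewords. The support of $p$ is $\{i:p_i\neq0\}$. For nonzero $p$, with $e$ the smallest number such that the sum of the $e$ largest $p_i$ is at least $\frac12\sum_ip_i$, $w^{BSC}(p)=2e$ if equality holds and $2e-1$ otherwise; $w^{AWGN}(p)=(\sum_ip_i)^2/\sum_ip_i^2$. *)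

(* Defs.v *)
From mathcomp Require Import all_boot all_order all_algebra all_fingroup.
Set Implicit Arguments. Unset Strict Implicit. Unset Printing Implicit Defensive.
Import Order.TTheory GRing.Theory Num.Theory.

(* A Tanner graph with variable nodes 'I_n and check nodes 'I_m is given by
   its (bipartite, simple) adjacency relation  H c v  (check c -- variable v). *)

(* A degree-l lift: copies (v,a), (c,b) with a,b : 'I_l; each edge (c,v) of H
   is replaced by the perfect matching (v,a) -- (c, pi c v a). *)
Definition lift_codeword (n m l : nat) (H : 'I_m -> 'I_n -> bool)
  (pi : 'I_m -> 'I_n -> {perm 'I_l}) (x : 'I_n -> 'I_l -> bool) : Prop :=
  forall (c : 'I_m) (b : 'I_l),
    ~~ odd #|[set va : 'I_n * 'I_l |
              [&& H c va.1, pi c va.1 va.2 == b & x va.1 va.2]]|.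

Definition lift_realizable (n m : nat) (H : 'I_m -> 'I_n -> bool)
  (p : {ffun 'I_n -> nat}) : Prop :=
  exists (l : nat) (pi : 'I_m -> 'I_n -> {perm 'I_l}) (x : 'I_n -> 'I_l -> bool),
    0 < l /\ lift_codeword H pi x /\ forall i, p i = #|[set a | x i a]|.

Definition nonzero_pcw (n : nat) (p : {ffun 'I_n -> nat}) : Prop :=
  exists i, p i != 0.

Definition irreducible (n m : nat) (H : 'I_m -> 'I_n -> bool)
  (p : {ffun 'I_n -> nat}) : Prop :=
  [/\ lift_realizable H p, nonzero_pcw p &
   ~ exists s : seq {ffun 'I_n -> nat},
       [/\ 2 <= size s,
           forall q, q \in s -> lift_realizable H q /\ nonzero_pcw q &
           forall i, p i = \sum_(q <- s) q i]].

Definition pcw_support (n : nat) (p : {ffun 'I_n -> nat}) : {set 'I_n} :=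
  [set i | p i != 0].

Definition pcw_total (n : nat) (p : {ffun 'I_n -> nat}) : nat := \sum_i p i.

Definition w_awgn (n : nat) (p : {ffun 'I_n -> nat}) : rat :=
  ((pcw_total p)%:R ^+ 2 / (\sum_i (p i ^ 2))%:R)%R.

Definition top_sum (n : nat) (p : {ffun 'I_n -> nat}) (e : nat) : nat :=
  sumn (take e (sort geq [seq p i | i <- enum 'I_n])).

Definition bsc_e (n : nat) (p : {ffun 'I_n -> nat}) : nat :=
  find (fun e => pcw_total p <= (top_sum p e).*2) (iota 0 n.+1).

Definition w_bsc (n : nat) (p : {ffun 'I_n -> nat}) : nat :=
  if (top_sum p (bsc_e p)).*2 == pcw_total p then (bsc_e p).*2
  else (bsc_e p).*2.-1.

(* Main.v *)
Require Import Defs.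
From mathcomp Require Import all_boot all_order all_algebra.
From mathcomp Require Import zify ring lra.
Import Order.TTheory GRing.Theory Num.Theory.
Lemma c (s : seq nat) t : (forall x, x \in s -> x <= t) -> sumn s <= size s * t.
Proof. elim: s => //= x s IH H. have := H x (mem_head _ _).
have := IH (fun y hy => H y (mem_behead (s := x :: s) hy)). lia. Qed.
Lemma d (s : seq nat) : count (fun x => x != 0) s <= sumn s.
Proof. elim: s => //= x s IH. case: x => //= x; lia. Qed.
Lemma a n (p : {ffun 'I_n -> nat}) : #|[set i | p i != 0]| = count (fun x => x != 0) [seq p i | i <- enum 'I_n].
Proof. rewrite cardE /enum_mem size_filter count_map /enum_mem.
rewrite (@eq_filter _ _ predT) // filter_predT.
apply: eq_count => i /=. by rewrite inE. Qed.
Lemma b n (p : {ffun 'I_n -> nat}) : \sum_i p i = sumn [seq p i | i <- enum 'I_n].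
Proof. by rewrite sumnE big_map big_enum. Qed.

Lemma bsc n (p : {ffun 'I_n -> nat}) t : 1 <= t -> (forall i, p i <= t) ->
  #|pcw_support p| <= w_bsc p * t.
Proof.
move=> t1 pt.
set s := sort geq [seq p i | i <- enum 'I_n].
have hperm : perm_eq s [seq p i | i <- enum 'I_n] by rewrite perm_sort.
have htot : pcw_total p = sumn s by rewrite /pcw_total b (perm_sumn hperm).
have hk : #|pcw_support p| = count (fun x => x != 0) s.
  by rewrite /pcw_support a (permP hperm).
have hall : forall x, x \in s -> x <= t.
  move=> x; rewrite (perm_mem hperm) => /mapP [i _ ->]; exact: pt.
have hsz : size s = n by rewrite size_sort size_map size_enum_ord.
have htopE : forall e, top_sum p e = sumn (take e s) by [].
set P := (fun e => pcw_total p <= (top_sum p e).*2).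
have hhas : has P (iota 0 n.+1).
  apply/hasP; exists n. rewrite mem_iota; lia.
  rewrite /P htopE take_oversize ?hsz // htot; lia.
have he : P (bsc_e p).
  have hlt : find P (iota 0 n.+1) < n.+1 by rewrite -{2}(size_iota 0 n.+1) -has_find.
  by have := nth_find 0 hhas; rewrite nth_iota // add0n.
have htop : sumn (take (bsc_e p) s) <= bsc_e p * t.
  apply: leq_trans (@c (take (bsc_e p) s) t _) _.
    by move=> x /mem_take; apply: hall.
  rewrite size_take_min leq_mul2r; lia.
have hsplit := cat_take_drop (bsc_e p) s.
have hS : sumn s = sumn (take (bsc_e p) s) + sumn (drop (bsc_e p) s) by rewrite -sumn_cat hsplit.
have hC : count (fun x => x != 0) s = count (fun x => x != 0) (take (bsc_e p) s) + count (fun x => x != 0) (drop (bsc_e p) s) by rewrite -count_cat hsplit.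
have hct : count (fun x => x != 0) (take (bsc_e p) s) <= bsc_e p.
  apply: leq_trans (count_size _ _) _; rewrite size_take_min; lia.
have hcd := d (drop (bsc_e p) s).
have hcs := d s.
move: he; rewrite /P htopE htot => he.
rewrite /w_bsc htopE htot hk.
move: htop hS hC hct hcd hcs he.
set e := bsc_e p; set T := sumn (take e s); set R := sumn (drop e s).
set ct := count _ (take e s); set cd := count _ (drop e s); set k := count _ s.
move=> htop hS hC hct hcd hcs he.
case: eqP => heq.
  nia.
have e1 : 0 < e by nia.
have hT : T >= k - e + 1 by lia.
have : (e - 1) * (t - 1) + (k - e + 1) <= e * t - e - t + 1 + e * t by nia.
nia.
Qed.
Lemma qn n (p : {ffun 'I_n -> nat}) t : 1 <= t -> (forall i, p i <= t) ->
  \sum_i p i ^ 2 + t * #|pcw_support p| <= (1 + t) * pcw_total p.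
Proof.
move=> t1 pt.
rewrite /pcw_support -sum1_card /pcw_total !big_distrr /= [X in _ + X]big_mkcond -big_split /=.
apply: leq_sum => i _; rewrite inE.
have := pt i; case: (p i) => [|x] /=; nia.
Qed.
Local Open Scope ring_scope.
Lemma alg (t k S Q : rat) : (t = 1 \/ 2 <= t) -> 0 <= k -> 0 <= S -> 0 < Q ->
  Q + t * k <= (1 + t) * S ->
  2 * t ^+ 2 * k * Q <= S ^+ 2 * ((1 + t ^+ 2) * (t - 1) + 2 * t).
Proof.
move=> ht hk hS hQ hQS.
have t1 : 1 <= t by case: ht => [->|]; lra.
have h1 : 4 * t * k * Q <= 4 * t * k * ((1 + t) * S - t * k).
  apply: ler_wpM2l; first by nra. lra.
have h2 : 4 * t * k * ((1 + t) * S - t * k) <= (1 + t) ^+ 2 * S ^+ 2.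
  have := sqr_ge0 ((1 + t) * S - 2 * t * k). nra.
have h3 : t * (1 + t) ^+ 2 <= 2 * ((1 + t ^+ 2) * (t - 1) + 2 * t).
  case: ht => [->|h]; first lra. 
  have : 0 <= (t - 1) ^+ 2 * (t - 2) by apply: mulr_ge0; [exact: sqr_ge0| lra].
  move=> h'. nra.
have h4 : t * (4 * t * k * Q) <= t * ((1 + t) ^+ 2 * S ^+ 2).
  apply: ler_wpM2l; lra.
have h5 : t * (1 + t) ^+ 2 * S ^+ 2 <= 2 * ((1 + t ^+ 2) * (t - 1) + 2 * t) * S ^+ 2.
  apply: ler_wpM2r; [exact: sqr_ge0 | exact: h3].
nra.
Qed.
Local Close Scope ring_scope.

Theorem lemma3 (n m : nat) (H : 'I_m -> 'I_n -> bool) (t : nat) :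
  1 <= t ->
  (forall q : {ffun 'I_n -> nat}, irreducible H q -> forall i, q i <= t) ->
  forall p : {ffun 'I_n -> nat}, irreducible H p ->
    ((2 * (t%:R) ^+ 2 / ((1 + (t%:R) ^+ 2) * (t%:R - 1) + 2 * t%:R))
        * (#|pcw_support p|)%:R <= w_awgn p)%R
    /\ ((#|pcw_support p|)%:R / t%:R <= (w_bsc p)%:R :> rat)%R.
Proof.
move=> t1 hirr p hp.
have pt := hirr p hp.
case: hp => _ [i0 hi0] _.
have tpos : (0 < t%:R :> rat)%R by rewrite ltr0n.
split.
  rewrite /w_awgn.
  have hq := @qn _ p t t1 pt.
  have Qpos : 0 < \sum_i p i ^ 2.
    rewrite (bigD1 i0) //=; have : 0 < p i0 ^ 2 by rewrite expn_gt0 lt0n hi0.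
    lia.
  have D0 : (0 < (1 + (t%:R) ^+ 2) * (t%:R - 1) + 2 * t%:R :> rat)%R.
    have : (1 <= t%:R :> rat)%R by rewrite ler1n.
    move=> h1; nra.
  have E : forall a b c d : rat, (a / b * c * d = a * c * d / b)%R.
    by move=> a b c d; rewrite (mulrAC a) (mulrAC (a * c)%R).
  rewrite ler_pdivlMr ?ltr0n // E ler_pdivrMr //.
  refine (@alg (t%:R) (#|pcw_support p|%:R) ((pcw_total p)%:R) ((\sum_i p i ^ 2)%:R) _ _ _ _ _).
  - have [->|ht2] := eqVneq t 1; [by left | right].
    by rewrite ler_nat; lia.
  - exact: ler0n.
  - exact: ler0n.
  - by rewrite ltr0n.
  - by move: hq; rewrite -(ler_nat rat) natrD !natrM natrD.
rewrite ler_pdivrMr // -natrM ler_nat; exact: bsc.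
Qed.
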